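(* For $z\in\mathbb{R}^d$ define $\|z\|_{1,\text{top-}\alpha\%}:=\|z\odot\texttt{FLT}_\alpha(z)\|_1$. Then $\|\cdot\|_{1,\text{top-}\alpha\%}$ is a norm on $\mathbb{R}^d$.
   Context: The coordinates of $\mathbb{R}^d$ are partitioned into $B$ blocks of sizes $d_1,\dots,d_B$ with $\sum_kd_k=d$; write $z=(z^{(1)},\dots,z^{(B)})$, $z^{(k)}\in\mathbb{R}^{d_k}$. Fix $\alpha\%\in(0,1]$. The top-$\alpha\%$ filter $\texttt{FLT}_\alpha(z)\in\{0,1\}^d$ is defined blockwise: in block $k$ it equals $1$ exactly on a set $S_k$ of $\lceil d_k\cdot\alpha\%\rceil$ indices whose absolute values $|z^{(k)}_i|$ rank within the top-$\alpha\%$ of the block (when several entries have equal absolute value, those with smallest indices are selected first), and $0$ elsewhere. $\odot$ is the entrywise product. *)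

(* Defs.v *)
From mathcomp Require Import all_boot all_order all_algebra.
From mathcomp Require Import reals.
Set Implicit Arguments. Unset Strict Implicit. Unset Printing Implicit Defensive.
Import Order.TTheory GRing.Theory Num.Theory.
Local Open Scope ring_scope.

Section TopAlpha.
Variables (R : realType) (d B : nat) (blk : 'I_d -> 'I_B) (a : R).
(* blk i = the block containing coordinate i; a = alpha% in (0,1]. *)

Definition blk_size (k : 'I_B) : nat := #|[pred i | blk i == k]|.

Definition nsel (k : 'I_B) : nat := `|Num.ceil ((blk_size k)%:R * a)|%N.

Definition beats (z : 'rV[R]_d) (j i : 'I_d) : bool :=
  (`|z ord0 i| < `|z ord0 j|) || ((`|z ord0 j| == `|z ord0 i|) && (j < i)%N).

Definition rank_in_blk (z : 'rV[R]_d) (i : 'I_d) : nat :=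
  #|[pred j | (blk j == blk i) && beats z j i]|.

Definition FLT (z : 'rV[R]_d) (i : 'I_d) : bool :=
  (rank_in_blk z i < nsel (blk i))%N.

Definition top_norm (z : 'rV[R]_d) : R :=
  \sum_(i < d) `|z ord0 i * (FLT z i)%:R|.
End TopAlpha.

Definition is_norm (R : realType) (d : nat) (N : 'rV[R]_d -> R) : Prop :=
  [/\ forall x, 0 <= N x,
      forall x, N x = 0 -> x = 0,
      forall (c : R) x, N (c *: x) = `|c| * N x
    & forall x y, N (x + y) <= N x + N y].

(* Main.v *)
Require Import Defs.
From mathcomp Require Import all_boot all_order all_algebra.
From mathcomp Require Import reals.
From mathcomp Require Import zify.
Import Order.TTheory GRing.Theory Num.Theory.
Local Open Scope ring_scope.

Section Aux.
Variable R : realType.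

Lemma exch (I : finType) (f : I -> R) (S T : {set I}) :
  (forall i, 0 <= f i) -> (#|S| <= #|T|)%N ->
  (forall i j, i \in T -> j \in S -> j \notin T -> f j <= f i) ->
  \sum_(i in S) f i <= \sum_(i in T) f i.
Proof.
move=> f0 hc hT.
rewrite (big_setID T) [X in _ <= X](big_setID S) /= setIC lerD2l.
have hc' : (#|S :\: T| <= #|T :\: S|)%N.
  have := cardsID T S; have := cardsID S T; rewrite setIC; lia.
case: (posnP #|S :\: T|) => [/eqP|hpos].
  rewrite cards_eq0 => /eqP ->; rewrite big_set0; exact: sumr_ge0.
set m := #|T :\: S|; set n := #|S :\: T|.
have hm : (0 < m)%N by apply: leq_trans hpos hc'.
have key : (\sum_(j in S :\: T) f j) * m%:R <= n%:R * \sum_(i in T :\: S) f i.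
  rewrite mulr_suml.
  apply: (@le_trans _ _ (\sum_(j in S :\: T) \sum_(i in T :\: S) f i)).
    apply: ler_sum => j hj.
    have -> : f j * m%:R = \sum_(i in T :\: S) f j by rewrite sumr_const mulr_natr.
    apply: ler_sum => i hi.
    move: hi hj; rewrite !inE => /andP[hiS hiT] /andP[hjT hjS]; exact: hT.
  by rewrite sumr_const -/n mulr_natl.
have hB : 0 <= \sum_(i in T :\: S) f i by apply: sumr_ge0.
have : (\sum_(j in S :\: T) f j) * m%:R <= (\sum_(i in T :\: S) f i) * m%:R.
  apply: (le_trans key); rewrite mulrC; apply: ler_wpM2l => //.
  by rewrite ler_nat.
by rewrite ler_pM2r // ltr0n.
Qed.
End Aux.

Section Main.
Variables (R : realType) (d B : nat) (blk : 'I_d -> 'I_B) (a : R).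

Lemma beats_irr (z : 'rV[R]_d) i : beats z i i = false.
Proof. by rewrite /beats ltxx ltnn andbF. Qed.

Lemma beats_total (z : 'rV[R]_d) i j : i != j -> beats z i j || beats z j i.
Proof.
move=> hij; rewrite /beats.
case: (boolP (`|z ord0 j| < `|z ord0 i|)) => //= h1.
case: (boolP (`|z ord0 i| < `|z ord0 j|)) => h2; first by rewrite orbT.
have h : `|z ord0 i| = `|z ord0 j|.
  by apply/eqP; rewrite eq_le !leNgt h1 h2.
rewrite h eqxx /=.
have : (nat_of_ord i != nat_of_ord j) by [].
lia.
Qed.

Arguments beats_total {z i j}.
Lemma beats_trans (z : 'rV[R]_d) i j k :
  beats z i j -> beats z j k -> beats z i k.
Proof.
rewrite /beats => /orP[h1|/andP[/eqP e1 h1]] /orP[h2|/andP[/eqP e2 h2]].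
- by rewrite (lt_trans h2 h1).
- by rewrite -e2 h1.
- by rewrite e1 h2.
- by rewrite e1 e2 eqxx (ltn_trans h1 h2) orbT.
Qed.

Arguments beats_trans {z i j k}.
Lemma beats_rank (z : 'rV[R]_d) i j : blk i = blk j -> beats z i j ->
  (rank_in_blk blk z i < rank_in_blk blk z j)%N.
Proof.
move=> eb hb; apply: proper_card; apply/properP; split.
  apply/subsetP => k; rewrite !inE => /andP[/eqP hk hki].
  by rewrite hk eb eqxx (beats_trans hki hb).
by exists i; rewrite !inE ?eqxx ?beats_irr ?eb ?eqxx ?hb // andbF.
Qed.

Arguments beats_rank {z i j}.
Lemma rank_lt (z : 'rV[R]_d) i : (rank_in_blk blk z i < blk_size blk (blk i))%N.
Proof.
apply: proper_card; apply/properP; split.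
  by apply/subsetP => k; rewrite !inE => /andP[].
by exists i; rewrite !inE ?eqxx // beats_irr andbF.
Qed.

Definition Tset (z : 'rV[R]_d) (k : 'I_B) : {set 'I_d} :=
  [set i | (blk i == k) && FLT blk a z i].

Lemma card_Tset (z : 'rV[R]_d) k :
  #|Tset z k| = count (fun r => r < nsel blk a k)%N (iota 0 (blk_size blk k)).
Proof.
set s := [seq rank_in_blk blk z i | i <- enum [pred i | blk i == k]].
have us : uniq s.
  rewrite map_inj_in_uniq ?enum_uniq //.
  move=> i j; rewrite !mem_enum !inE => /eqP hi /eqP hj he.
  apply/eqP; apply: contraT => hij.
  have eb : blk i = blk j by rewrite hi hj.
  case/orP: (@beats_total z i j hij) => hb.
    by move: (beats_rank eb hb); rewrite he ltnn.
  by move: (beats_rank (esym eb) hb); rewrite he ltnn.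
have ss : {subset s <= iota 0 (blk_size blk k)}.
  move=> r /mapP[i]; rewrite mem_enum inE => /eqP hi ->.
  by rewrite mem_iota add0n /= -hi rank_lt.
have hsz : size s = blk_size blk k by rewrite size_map -cardE.
have [_ hmem] := uniq_min_size us ss (eq_leq (etrans (size_iota 0 _) (esym hsz))).
have hp : perm_eq s (iota 0 (blk_size blk k)) by apply: uniq_perm => //; exact: iota_uniq.
rewrite -(permP hp) count_map cardE.
rewrite /Tset.
have -> : enum [set i | (blk i == k) && FLT blk a z i] =
   filter (fun i => FLT blk a z i) (enum [pred i | blk i == k]).
  rewrite /enum_mem -filter_predI; apply: eq_filter => i; rewrite !inE /=.
  by rewrite andbC.
rewrite size_filter; apply: eq_in_count => i; rewrite mem_enum inE => /eqP hi.
by rewrite /= /FLT hi.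
Qed.

Lemma top_Tset (z : 'rV[R]_d) k i j : i \in Tset z k -> blk j = k -> j \notin Tset z k ->
  `|z ord0 j| <= `|z ord0 i|.
Proof.
rewrite !inE => /andP[/eqP hi hF] hj; rewrite hj eqxx /= => hF'.
rewrite leNgt; apply/negP => hlt.
have hb : beats z j i by rewrite /beats hlt.
have := beats_rank (etrans hj (esym hi)) hb.
move: hF hF'; rewrite /FLT hi hj; lia.
Qed.

Lemma top_split (z : 'rV[R]_d) :
  top_norm blk a z = \sum_(k : 'I_B) \sum_(i in Tset z k) `|z ord0 i|.
Proof.
rewrite /top_norm (partition_big blk xpredT) //=.
apply: eq_bigr => k _; rewrite [RHS]big_mkcond [LHS]big_mkcond /=.
apply: eq_bigr => i _; rewrite inE.
case: (blk i == k) => //=.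
by case: (FLT blk a z i); rewrite ?mulr1 ?mulr0 ?normr0.
Qed.

Lemma nsel_pos k : 0 < a -> (0 < blk_size blk k)%N -> (0 < nsel blk a k)%N.
Proof.
move=> ha hk; rewrite /nsel.
have hx : 0 < (blk_size blk k)%:R * a by rewrite mulr_gt0 // ltr0n.
have hc : (0 < Num.ceil ((blk_size blk k)%:R * a))%R.
  rewrite lt_neqAle ceil_ge0 (lt_trans _ hx) ?ltrN10 // andbT eq_sym ceil_neq0 hx orbT //.
move: hc; case: (Num.ceil _) => // n; rewrite ltz_nat => h //=.
Qed.

End Main.

Arguments Tset {R d B} blk a z k.
Arguments card_Tset {R d B} blk a z k.
Arguments top_Tset {R d B} blk a z k i j.
Arguments top_split {R d B} blk a z.
Arguments nsel_pos {R d B} blk a k.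

Lemma beats_scale (R : realType) d (z : 'rV[R]_d) c i j : c != 0 ->
  beats (c *: z) i j = beats z i j.
Proof.
move=> hc; rewrite /beats !mxE !normrM.
have hc' : 0 < `|c| by rewrite normr_gt0.
have hc0 : `|c| != 0 by rewrite normr_eq0.
by rewrite ltr_pM2l // (inj_eq (mulfI hc0)).
Qed.

Lemma FLT_scale (R : realType) d B (blk : 'I_d -> 'I_B) a (z : 'rV[R]_d) c i : c != 0 ->
  FLT blk a (c *: z) i = FLT blk a z i.
Proof.
move=> hc; rewrite /FLT /rank_in_blk.
congr (_ < _)%N; apply: eq_card => j; rewrite !inE beats_scale //.
Qed.

Theorem proposition1 (R : realType) (d B : nat) (blk : 'I_d -> 'I_B) (a : R)
  (ha0 : 0 < a) (ha1 : a <= 1) :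
  is_norm (top_norm blk a).
Proof.
split.
- by move=> x; apply: sumr_ge0 => i _; apply: normr_ge0.
- move=> x; rewrite top_split => h0.
  apply/rowP => j; rewrite mxE.
  apply/eqP; rewrite -normr_eq0 eq_le normr_ge0 andbT.
  set k := blk j.
  have hk : \sum_(i in Tset blk a x k) `|x ord0 i| = 0.
    apply: (psumr_eq0P _ h0) => // k' _; apply: sumr_ge0 => i _; exact: normr_ge0.
  rewrite -hk.
  have -> : `|x ord0 j| = \sum_(i in [set j]) `|x ord0 i| by rewrite big_set1.
  apply: exch => //.
  + rewrite cards1 card_Tset.
    have hb : (0 < blk_size blk k)%N by apply/card_gt0P; exists j; rewrite inE.
    have hn := nsel_pos blk a k ha0 hb.
    case: (blk_size blk k) hb => // n _ /=; rewrite hn; lia.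
  + move=> i j' hi; rewrite inE => /eqP -> hj.
    exact: (top_Tset blk a x k i j hi erefl hj).
- move=> c x; case: (eqVneq c 0) => [->|hc].
    rewrite scale0r normr0 mul0r /top_norm; apply: big1 => i _.
    by rewrite mxE mul0r normr0.
  rewrite /top_norm mulr_sumr; apply: eq_bigr => i _.
  by rewrite FLT_scale // mxE -mulrA normrM.
- move=> x y; rewrite !top_split -big_split /=; apply: ler_sum => k _.
  apply: (@le_trans _ _ (\sum_(i in Tset blk a (x + y) k) (`|x ord0 i| + `|y ord0 i|))).
    by apply: ler_sum => i _; rewrite mxE ler_normD.
  rewrite big_split /=; apply: lerD; apply: exch => //;
    rewrite ?card_Tset // => i j hi hj hn; (apply: top_Tset hi _ hn);
    by move: hj; rewrite inE => /andP[/eqP].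
Qed.
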